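(* Let $N\ge 0$ and let $\mu=(\mu_1,\dots,\mu_{N+1})$ be a partition with $N+1$ parts. Then, for all $z_1,\dots,z_{N+1}$ (with pairwise distinct values so that the defining quotients make sense, the identity then extending polynomially), $$G_\mu(z_1,\dots,z_N,z_{N+1};\beta)=\sum_{\lambda:\ \mu\succ\lambda} G_{\mu/\lambda}(z_{N+1};\beta)\,G_\lambda(z_1,\dots,z_N;\beta),$$ where the sum runs over all partitions $\lambda=(\lambda_1,\dots,\lambda_N)$ with $N$ parts interlacing with $\mu$. At $\beta=0$ this is the corresponding branching rule for Schur and skew Schur polynomials.
   Context: A ''partition with $N$ parts'' means a weakly decreasing sequence $\lambda=(\lambda_1,\dots,\lambda_N)$ of nonnegative integers (zeros allowed); $|\lambda|=\sum_j\lambda_j$. For such $\lambda$, variables $z_1,\dots,z_N$ and a parameter $\beta$, the Grothendieck polynomial is $$G_\lambda(z_1,\dots,z_N;\beta)=\frac{\det_{1\le j,k\le N}\big(z_j^{\lambda_k+N-k}(1+\beta z_j)^{k-1}\big)}{\prod_{1\le j<k\le N}(z_j-z_k)},$$ (a symmetric polynomial; for $N=0$ it equals $1$). For $\mu$ with $N+1$ parts and $\lambda$ with $N$ parts, write $\mu\succ\lambda$ (''interlace'') iff $\mu_j\ge\lambda_j\ge\mu_{j+1}$ for $j=1,\dots,N$. The single-variable skew Grothendieck polynomial is $$G_{\mu/\lambda}(z;\beta)=\begin{cases} z^{|\mu|-|\lambda|}\prod_{j=1}^N\big(1+\beta z-\beta z\,\delta_{\mu_{j+1},\lambda_j}\big)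 & \text{if } \mu\succ\lambda,\\ 0&\text{otherwise,}\end{cases}$$ with $\delta$ the Kronecker delta. *)

(* Defs.v *)
From HB Require Import structures.
From mathcomp Require Import all_boot all_order all_algebra.
Set Implicit Arguments. Unset Strict Implicit. Unset Printing Implicit Defensive.
Import Order.TTheory GRing.Theory Num.Theory.
Local Open Scope ring_scope.

(* A partition with n parts: weakly decreasing lam : 'I_n -> nat
   (index j : 'I_n stands for the paper's index j+1). *)
Definition is_partition (n : nat) (lam : 'I_n -> nat) : bool :=
  [forall i : 'I_n, forall j : 'I_n, (i <= j)%N ==> (lam j <= lam i)%N].

Definition psize (n : nat) (lam : 'I_n -> nat) : nat := (\sum_(j < n) lam j)%N.

(* Grothendieck polynomial G_lam(z_1..z_N; beta), as the quotient
   det( z_j^(lam_k + N - k) (1 + beta z_j)^(k-1) ) / prod_{j<k} (z_j - z_k),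
   with 0-based indices j,k : 'I_N (paper's k = k0 + 1). *)
Definition groth (R : fieldType) (N : nat) (lam : 'I_N -> nat)
  (z : 'I_N -> R) (beta : R) : R :=
  \det (\matrix_(j < N, k < N)
          (z j ^+ (lam k + (N - k.+1)) * (1 + beta * z j) ^+ k))
  / \prod_(j < N) \prod_(k < N | (j < k)%N) (z j - z k).

Definition interlace (N : nat) (mu : 'I_N.+1 -> nat) (lam : 'I_N -> nat) : bool :=
  [forall j : 'I_N,
     (lam j <= mu (widen_ord (leqnSn N) j))%N && (mu (lift ord0 j) <= lam j)%N].

Definition skew_groth (R : fieldType) (N : nat) (mu : 'I_N.+1 -> nat)
  (lam : 'I_N -> nat) (x beta : R) : R :=
  if interlace mu lam then
    x ^+ (psize mu - psize lam) *
    \prod_(j < N) (1 + beta * x - beta * x * ((mu (lift ord0 j) == lam j) : nat)%:R)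
  else 0.

(* Main.v *)
From HB Require Import structures.
Require Import Defs.
From mathcomp Require Import all_boot all_order all_algebra perm.
From mathcomp Require Import ring lra zify.
Set Implicit Arguments. Unset Strict Implicit. Unset Printing Implicit Defensive.
Import Order.TTheory GRing.Theory Num.Theory.
Local Open Scope ring_scope.

Section Core.
Variable R : comNzRingType.

Definition cf (x b : R) (B A L : nat) (l : 'I_L) : R :=
  if (B <= l)%N && (l <= A)%N then
    x ^+ (A - l) * (if (l == B :> nat) then 1 else 1 + b * x) else 0.

Lemma core (x z b : R) (B L t : nat) : (B + t < L)%N ->
  (1 + b * x) * z ^+ (B + t).+1 - x ^+ t.+1 * z ^+ B * (1 + b * z) =
  (z - x) * \sum_(l < L) cf x b B (B + t) l * z ^+ l.
Proof.
elim: t => [|t IH] HL.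
  rewrite (bigD1 (Ordinal HL)) //= big1 => [|i Hi].
    rewrite /cf /= addn0 leqnn eqxx subnn expr0 mul1r !exprS /= expr0; ring.
  rewrite /cf addn0; case: ifP => [/andP[H1 H2]|]; last by rewrite mul0r.
  exfalso.
  move: Hi; have -> : i = Ordinal HL by apply/val_inj => /=; lia.
  by rewrite eqxx.
have HL' : (B + t < L)%N by lia.
have E : \sum_(l < L) cf x b B (B + t.+1) l * z ^+ l =
   x * \sum_(l < L) cf x b B (B + t) l * z ^+ l + (1 + b * x) * z ^+ (B + t.+1).
  rewrite big_distrr /= (bigD1 (Ordinal HL)) //= [in RHS](bigD1 (Ordinal HL)) //=.
  rewrite /cf /= leqnn leq_addr /= (_ : (B + t.+1 <= B + t)%N = false); last by lia.
  rewrite (_ : (B + t.+1 == B) = false); last by lia.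
  rewrite subnn expr0 mul1r mul0r mulr0 add0r addrC; congr (_ + _).
  apply: eq_bigr => i Hi.
  have Hi' : (i : nat) <> B + t.+1 by move=> Hx; move: Hi; apply/negP/negPn/eqP/val_inj.
  case: (leqP B i) => H1 /=; last by rewrite !mul0r mulr0.
  case: (leqP i (B + t)) => H2.
    rewrite (_ : (i <= B + t.+1)%N = true); last by lia.
    rewrite (_ : B + t.+1 - i = (B + t - i).+1)%N; last by lia.
    rewrite exprS; ring.
  rewrite (_ : (i <= B + t.+1)%N = false); last by lia.
  by rewrite !mul0r mulr0.
rewrite E (mulrDr (z - x)) mulrCA -(IH HL') addnS !exprS; ring.
Qed.
End Core.
Lemma det_multilin (R : comNzRingType) n m (F : 'I_n -> 'I_m -> R)
  (G : 'I_n -> 'I_n -> 'I_m -> R) :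
  \det (\matrix_(j, k) \sum_(l < m) F k l * G j k l) =
  \sum_(f : {ffun 'I_n -> 'I_m}) (\prod_k F k (f k)) * \det (\matrix_(j, k) G j k (f k)).
Proof.
rewrite -det_tr; under [in RHS]eq_bigr => f _ do rewrite -det_tr.
rewrite /determinant.
under [in LHS]eq_bigr => s _.
  rewrite (eq_bigr (fun k => \sum_(l < m) F k l * G (s k) k l)); last first.
    by move=> k _; rewrite !mxE.
  rewrite bigA_distr_bigA big_distrr /=.
  over.
rewrite exchange_big /=; apply: eq_bigr => f _.
rewrite big_distrr /=; apply: eq_bigr => s _.
rewrite big_split /= mulrCA; congr (_ * (_ * _)).
by apply: eq_bigr => k _; rewrite !mxE.
Qed.

Lemma det_rowscale (R : comNzRingType) n (d : 'I_n -> R) (B : 'I_n -> 'I_n -> R) :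
  \det (\matrix_(i, j) (d i * B i j)) = (\prod_i d i) * \det (\matrix_(i, j) B i j).
Proof.
set A := \matrix_(i, j) B i j.
have -> : \matrix_(i, j) (d i * B i j) = \matrix_(i, j) (d i * A i j).
  by apply/matrixP => i j; rewrite !mxE.
have E : \matrix_(i, j) (d i * A i j) = diag_mx (\row_i d i) *m A.
  by rewrite mul_diag_mx; apply/matrixP => i j; rewrite !mxE.
rewrite E det_mulmx det_diag; congr (_ * _); apply: eq_bigr => i _; by rewrite mxE.
Qed.

Definition Dm (R : comNzRingType) n (lam : 'I_n -> nat) (z : 'I_n -> R) (b : R) : R :=
  \det (\matrix_(j < n, k < n) (z j ^+ (lam k + (n - k.+1)) * (1 + b * z j) ^+ k)).

Lemma part_le n (mu : 'I_n -> nat) (i j : 'I_n) :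
  is_partition mu -> (i <= j)%N -> (mu j <= mu i)%N.
Proof. by move=> /forallP /(_ i) /forallP /(_ j) /implyP; apply. Qed.

Section Gen.
Variables (R : comNzRingType) (N : nat) (mu : 'I_N.+1 -> nat) (z : 'I_N.+1 -> R) (b : R).
Hypothesis Hmu : is_partition mu.
Local Notation wd := (widen_ord (leqnSn N)).
Local Notation x := (z ord_max).
Local Notation y := (1 + b * z ord_max).

Definition MM : 'M[R]_N.+1 :=
  \matrix_(j, k) (z j ^+ (mu k + (N.+1 - k.+1)) * (1 + b * z j) ^+ k).
Definition UU : 'M[R]_N.+1 :=
  \matrix_(r, k) (if r == k then (if (k < N)%N then y else 1)
                  else if (r == k.+1 :> nat) then - x ^+ (mu k - mu r).+1 else 0).

Lemma detUU : \det UU = y ^+ N.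
Proof.
rewrite det_trig.
  rewrite big_ord_recr /= !mxE eqxx ltnn mulr1.
  rewrite (eq_bigr (fun _ => y)) ?prodr_const ?card_ord // => i _.
  by rewrite !mxE eqxx /= ltn_ord.
apply/forallP => i; apply/forallP => j; apply/implyP => Hij.
rewrite !mxE; have [E|Ne] := eqVneq i j; first by rewrite E ltnn in Hij.
have [E|Ne2] := eqVneq (i : nat) j.+1; last by [].
by rewrite E ltnNge leqnSn in Hij.
Qed.

Lemma MU_wd i (k : 'I_N) : (MM *m UU) i (wd k) =
  y * MM i (wd k) - x ^+ (mu (wd k) - mu (lift ord0 k)).+1 * MM i (lift ord0 k).
Proof.
rewrite mxE (bigD1 (wd k)) //= (bigD1 (lift ord0 k)) /=; last first.
  by apply/eqP => /(congr1 (@nat_of_ord _)); rewrite lift0 /= => /esym /n_Sn.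
rewrite big1 => [|r /andP[H1 H2]]; last first.
  rewrite !mxE (negbTE H1) ifN ?mulr0 //.
rewrite /UU !mxE eqxx /= ltn_ord.
rewrite ifN; last by apply/eqP => /(congr1 (@nat_of_ord _)); rewrite lift0 /= => /esym /n_Sn.
rewrite /bump leq0n add1n eqxx; ring.
Qed.

Lemma MU_max i : (MM *m UU) i ord_max = MM i ord_max.
Proof.
rewrite mxE (bigD1 ord_max) //= big1 => [|r Hr].
  by rewrite !mxE eqxx ltnn mulr1 addr0.
rewrite !mxE (negbTE Hr) ifN ?mulr0 //.
by apply/eqP => E; have := ltn_ord r; rewrite E ltnn.
Qed.

Lemma mu_lift (k : 'I_N) : (mu (lift ord0 k) <= mu (wd k))%N.
Proof. by apply: part_le => //; rewrite lift0 /=. Qed.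

Lemma mu_wd0 (k : 'I_N) : (mu (wd k) <= mu ord0)%N.
Proof. by apply: part_le. Qed.

Lemma MU_last (k : 'I_N) : (MM *m UU) ord_max (wd k) = 0.
Proof.
rewrite MU_wd /MM !mxE lift0 /=.
have H := mu_lift k; have Hk := ltn_ord k.
rewrite (_ : (mu (wd k) + (N.+1 - k.+1) =
   (mu (wd k) - mu (lift ord0 k)).+1 + (mu (lift ord0 k) + (N.+1 - k.+2)))%N); last by lia.
rewrite exprD !exprS; ring.
Qed.

Lemma MU_inner (j k : 'I_N) : (MM *m UU) (wd j) (wd k) =
  (z (wd j) - x) * \sum_(l < (mu ord0).+1) cf x b (mu (lift ord0 k)) (mu (wd k)) l *
    (z (wd j) ^+ (l + (N - k.+1)) * (1 + b * z (wd j)) ^+ k).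
Proof.
rewrite MU_wd /MM !mxE lift0 /=.
have H := mu_lift k; have Hk := ltn_ord k; have H0 := mu_wd0 k.
set B := mu (lift ord0 k); set A := mu (wd k).
have HL : (B + (A - B) < (mu ord0).+1)%N by lia.
have := core x (z (wd j)) b HL; rewrite (subnKC H) => C.
rewrite (_ : (A + (N.+1 - k.+1) = A.+1 + (N - k.+1))%N); last by lia.
rewrite (_ : (B + (N.+1 - k.+2) = B + (N - k.+1))%N); last by lia.
rewrite !exprD !exprS.
transitivity (((1 + b * x) * z (wd j) ^+ A.+1 -
    x ^+ (A - B).+1 * z (wd j) ^+ B * (1 + b * z (wd j))) *
    (z (wd j) ^+ (N - k.+1) * (1 + b * z (wd j)) ^+ k)); first by rewrite !exprS; ring.
rewrite C -mulrA; congr (_ * _); rewrite big_distrl /=; apply: eq_bigr => l _.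
rewrite exprD; ring.
Qed.

Lemma gen_main : y ^+ N * Dm mu z b = y ^+ N * (x ^+ mu ord_max *
  \prod_(j < N) (z (wd j) - x) *
  \sum_(f : {ffun 'I_N -> 'I_(mu ord0).+1})
     (\prod_k cf x b (mu (lift ord0 k)) (mu (wd k)) (f k)) *
     Dm (fun j => nat_of_ord (f j)) (fun j => z (wd j)) b).
Proof.
have -> : Dm mu z b = \det MM by [].
rewrite [in LHS]mulrC -[in LHS]detUU -det_mulmx (expand_det_row _ ord_max) big_ord_recr /=.
rewrite big1 => [|k _]; last by rewrite MU_last mul0r.
rewrite add0r MU_max /cofactor /MM [in X in X * _]mxE subnn addn0 /=.
have -> : (-1) ^+ (N + N) = 1 :> R by rewrite exprD -exprMn mulrNN mulr1 expr1n.
rewrite mul1r.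
have -> : row' ord_max (col' ord_max (MM *m UU)) =
   \matrix_(j, k) ((z (wd j) - x) * \sum_(l < (mu ord0).+1)
      cf x b (mu (lift ord0 k)) (mu (wd k)) l *
      (z (wd j) ^+ (l + (N - k.+1)) * (1 + b * z (wd j)) ^+ k)).
  apply/matrixP => j k; rewrite [LHS]mxE [LHS]mxE [RHS]mxE -MU_inner.
  by congr ((MM *m UU) _ _); apply/val_inj => /=; rewrite /bump leqNgt ltn_ord.
rewrite det_rowscale det_multilin /Dm; ring.
Qed.

End Gen.

Lemma Dm_map (R1 R2 : comNzRingType) (f : {rmorphism R1 -> R2}) n lam
  (z1 : 'I_n -> R1) z2 b1 b2 : (forall j, f (z1 j) = z2 j) -> f b1 = b2 ->
  f (Dm lam z1 b1) = Dm lam z2 b2.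
Proof.
move=> Hz Hb; rewrite /Dm -det_map_mx; congr (\det _); apply/matrixP => i j.
by rewrite !mxE rmorphM !rmorphXn rmorphD rmorph1 rmorphM Hz Hb.
Qed.

Lemma cf_map (R1 R2 : comNzRingType) (f : {rmorphism R1 -> R2}) x b B A L (l : 'I_L) :
  f (cf x b B A l) = cf (f x) (f b) B A l.
Proof.
rewrite /cf; case: ifP => _; last by rewrite rmorph0.
rewrite rmorphM rmorphXn; case: ifP => _; first by rewrite rmorph1.
by rewrite rmorphD rmorph1 rmorphM.
Qed.

Lemma field_main (F : fieldType) N (mu : 'I_N.+1 -> nat) (z : 'I_N.+1 -> F) b :
  is_partition mu ->
  Dm mu z b = z ord_max ^+ mu ord_max *
  \prod_(j < N) (z (widen_ord (leqnSn N) j) - z ord_max) *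
  \sum_(f : {ffun 'I_N -> 'I_(mu ord0).+1})
     (\prod_k cf (z ord_max) b (mu (lift ord0 k)) (mu (widen_ord (leqnSn N) k)) (f k)) *
     Dm (fun j => nat_of_ord (f j)) (fun j => z (widen_ord (leqnSn N) j)) b.
Proof.
move=> Hmu.
have G := gen_main (fun j => (z j)%:P) 'X Hmu.
have Hy : (1 + 'X * (z ord_max)%:P : {poly F}) ^+ N != 0.
  apply: expf_neq0; apply/eqP => /(congr1 (horner^~ 0)).
  by rewrite !hornerE /= => /eqP; rewrite oner_eq0.
move/(mulfI Hy): G => /(congr1 (horner_eval b)).
rewrite (@Dm_map _ _ (horner_eval b) _ _ _ z _ b); last first.
- exact: hornerX.
- by move=> j; exact: hornerC.
move=> ->.
rewrite !rmorphM rmorphXn /= horner_evalE hornerC rmorph_prod rmorph_sum /=.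
congr (_ * _ * _).
  by apply: eq_bigr => j _; rewrite rmorphB /= !horner_evalE !hornerC.
apply: eq_bigr => f _; rewrite rmorphM rmorph_prod /=.
congr (_ * _).
  apply: eq_bigr => k _; rewrite cf_map /= !horner_evalE hornerC hornerX //.
rewrite (@Dm_map _ _ (horner_eval b) _ _ _ (fun j => z (widen_ord (leqnSn N) j)) _ b) //.
- by move=> j; exact: hornerC.
- exact: hornerX.
Qed.

Lemma vdm_split (F : fieldType) N (z : 'I_N.+1 -> F) :
  \prod_(j < N.+1) \prod_(k < N.+1 | (j < k)%N) (z j - z k) =
  (\prod_(j < N) \prod_(k < N | (j < k)%N)
      (z (widen_ord (leqnSn N) j) - z (widen_ord (leqnSn N) k))) *
  \prod_(j < N) (z (widen_ord (leqnSn N) j) - z ord_max).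
Proof.
rewrite big_ord_recr /= [X in _ * X]big1 ?mulr1 => [|k Hk]; last first.
  by move: Hk; rewrite ltnNge -ltnS ltn_ord.
rewrite -big_split /=; apply: eq_bigr => j _.
rewrite big_mkcond big_ord_recr /= ltn_ord [in RHS]big_mkcond /=; congr (_ * _).
Qed.

Lemma vdm_neq0 (F : fieldType) n (z : 'I_n -> F) : injective z ->
  \prod_(j < n) \prod_(k < n | (j < k)%N) (z j - z k) != 0.
Proof.
move=> inj; apply/prodf_neq0 => j _; apply/prodf_neq0 => k Hjk.
rewrite subr_eq0; apply/eqP => /inj E; by rewrite E ltnn in Hjk.
Qed.

Lemma interlace_part N (mu : 'I_N.+1 -> nat) (lam : 'I_N -> nat) :
  is_partition mu -> interlace mu lam -> is_partition lam.
Proof.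
move=> Hmu /forallP Hi; apply/forallP => i; apply/forallP => j; apply/implyP => Hij.
have [E|Ne] := eqVneq i j; first by rewrite E.
have /andP[Hj _] := Hi j; have /andP[_ Hi2] := Hi i.
apply: leq_trans Hj _; apply: leq_trans Hi2; apply: part_le => //.
rewrite lift0 /=; have : (i : nat) != j by apply/eqP => /val_inj; apply/eqP.
lia.
Qed.

Unset Implicit Arguments.
Theorem mainTheorem1 (R : fieldType) (N : nat) (mu : 'I_N.+1 -> nat)
  (z : 'I_N.+1 -> R) (beta : R) :
  is_partition mu -> injective z ->
  groth mu z beta =
  \sum_(l : {ffun 'I_N -> 'I_(mu ord0).+1}
          | is_partition (fun j => nat_of_ord (l j))
            && interlace mu (fun j => nat_of_ord (l j)))
     skew_groth mu (fun j => nat_of_ord (l j)) (z ord_max) beta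
     * groth (fun j => nat_of_ord (l j)) (fun j => z (widen_ord (leqnSn N) j)) beta.
Proof.
move=> Hmu inj.
have -> : groth mu z beta = Dm mu z beta /
   \prod_(j < N.+1) \prod_(k < N.+1 | (j < k)%N) (z j - z k) by [].
rewrite field_main // vdm_split.
set x := z ord_max.
set P := \prod_(j < N) (z (widen_ord (leqnSn N) j) - x).
set D := \prod_(j < N) \prod_(k < N | (j < k)%N) _.
have hP : P != 0.
  apply/prodf_neq0 => j _; rewrite subr_eq0; apply/eqP => /inj /(congr1 val) /=.
  by move=> E; have := ltn_ord j; rewrite E ltnn.
have hD : D != 0.
  apply: vdm_neq0 => i j /inj /(congr1 val) /= E; exact: val_inj.
set S := \sum_f _.
have -> : x ^+ mu ord_max * P * S / (D * P) = x ^+ mu ord_max * S / D.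
  by rewrite [D * P]mulrC invfM !mulrA (mulrAC _ P) mulfK.
rewrite /S big_distrr big_distrl /= [RHS]big_mkcond /=; apply: eq_bigr => f _.
set lam := fun j => nat_of_ord (f j).
have -> : groth lam (fun j => z (widen_ord (leqnSn N) j)) beta =
   Dm lam (fun j => z (widen_ord (leqnSn N) j)) beta / D by [].
case Hint: (interlace mu lam); last first.
  rewrite andbF.
  have -> : \prod_(k < N) cf x beta (mu (lift ord0 k)) (mu (widen_ord (leqnSn N) k)) (f k) = 0.
    move/negbT: Hint; rewrite /interlace negb_forall => /existsP [k Hk].
    rewrite (bigD1 k) //= /cf (_ : (_ && _) = false) ?mul0r //.
    by apply/negbTE; move: Hk; rewrite andbC.
  by rewrite !(mul0r, mulr0).
rewrite (interlace_part Hmu Hint) /skew_groth Hint /=.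
rewrite !mulrA; congr (_ * _ / _).
have Hk : forall k, (lam k <= mu (widen_ord (leqnSn N) k))%N && (mu (lift ord0 k) <= lam k)%N.
  by move=> k; move/forallP: Hint => /(_ k).
rewrite (eq_bigr (fun k => x ^+ (mu (widen_ord (leqnSn N) k) - lam k) *
   (1 + beta * x - beta * x * (mu (lift ord0 k) == lam k)%:R))); last first.
  move=> k _; rewrite /cf; have /andP[h1 h2] := Hk k.
  rewrite -/(lam k) h1 h2 /= eq_sym; congr (_ * _).
  by case: eqP => _; rewrite ?mulr1 ?mulr0 ?subr0 // addrK.
rewrite big_split /= prodrXr mulrA -exprD; congr (_ ^+ _ * _).
have Hs : (\sum_(k < N) lam k <= \sum_(k < N) mu (widen_ord (leqnSn N) k))%N.
  by apply: leq_sum => k _; have /andP[] := Hk k.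
rewrite sumnB; last by move=> k _; have /andP[] := Hk k.
rewrite /psize big_ord_recr /=; rewrite [in RHS]addnC -addnBA //.
Qed.
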